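(* Let $q'>0$, $e'\in(0,1)$, $q_{\max}>0$. There is no $(q,e)\in\mathcal D_4$ such that the orbits are linked for every $(\omega,\omega')\in\mathcal D_3$.
   Context: For $q>0$, $e\in[0,1]$ and angles $\omega,\omega'$, define $r_{\pm}=\frac{q(1+e)}{1\pm e\cos\omega}$, $r'_{\pm}=\frac{q'(1+e')}{1\pm e'\cos\omega'}$ (extended-real values allowed), $d^+=r'_+-r_+$, $d^-=r'_--r_-$. Linked orbits: $d^+d^-<0$. $\mathcal D_3=\{(\omega,\omega'):0\le\omega\le\pi/2,\ 0\le\omega'\le\pi\}$, $\mathcal D_4=\{(q,e):0<q\le q_{\max},\ 0\le e\le1\}$. *)

(* Defs.v *)
From Stdlib Require Import Reals Lra.
Open Scope R_scope.

Inductive ER : Type := Fin (x : R) | PInf.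

(* r = q(1+e)/den, with the convention that a zero denominator gives +oo
   (for q>0, e in [0,1] the numerator is positive and den >= 0). *)
Definition rdiv_ext (num den : R) : ER :=
  if Req_EM_T den 0 then PInf else Fin (num / den).

Definition r_plus (q e w : R) : ER := rdiv_ext (q * (1 + e)) (1 + e * cos w).
Definition r_minus (q e w : R) : ER := rdiv_ext (q * (1 + e)) (1 - e * cos w).

Definition diff_pos (a b : ER) : Prop :=
  match a, b with
  | Fin x, Fin y => x - y > 0
  | PInf, Fin _ => True
  | _, _ => False   (* b = +oo gives -oo; +oo - +oo undefined *)
  end.
Definition diff_neg (a b : ER) : Prop :=
  match a, b with
  | Fin x, Fin y => x - y < 0
  | Fin _, PInf => True
  | _, _ => False
  end.

(* d^+ = r'_+ - r_+ , d^- = r'_- - r_- ; linked iff d^+ d^- < 0,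
   i.e. the two differences have strictly opposite signs. *)
Definition linked (q e w q' e' w' : R) : Prop :=
  let dp := (r_plus q' e' w', r_plus q e w) in
  let dm := (r_minus q' e' w', r_minus q e w) in
  (diff_pos (fst dp) (snd dp) /\ diff_neg (fst dm) (snd dm)) \/
  (diff_neg (fst dp) (snd dp) /\ diff_pos (fst dm) (snd dm)).

Definition in_D3 (w w' : R) : Prop := 0 <= w <= PI / 2 /\ 0 <= w' <= PI.
Definition in_D4 (qmax q e : R) : Prop := 0 < q <= qmax /\ 0 <= e <= 1.

(* Main.v *)
Require Import Defs.
From Stdlib Require Import Reals Lra.
Open Scope R_scope.

Theorem mainTheorem12 (q' e' qmax : R) :
  0 < q' -> 0 < e' < 1 -> 0 < qmax ->
  ~ (exists q e, in_D4 qmax q e /\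
       forall w w', in_D3 w w' -> linked q e w q' e' w').
Proof.
  intros Hq He Hm [q [e [HD H]]].
  assert (HP := PI_RGT_0).
  specialize (H (PI/2) (PI/2)).
  assert (D : in_D3 (PI/2) (PI/2)) by (unfold in_D3; lra).
  specialize (H D).
  unfold linked, r_plus, r_minus in H; simpl in H.
  rewrite cos_PI2 in H.
  replace (1 + e * 0) with 1 in H by ring.
  replace (1 - e * 0) with 1 in H by ring.
  replace (1 + e' * 0) with 1 in H by ring.
  replace (1 - e' * 0) with 1 in H by ring.
  unfold Defs.rdiv_ext in H; destruct (Req_EM_T 1 0); [lra|].
  simpl in H. lra.
Qed.
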